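(* Let $\Theta$ be a branch of a tableau of $\mathbf{TAB}_{\mathbf{IB}}$. Then $\Theta$ is infinite if and only if there is an infinite sequence of nominals $i_0\prec_\Theta i_1\prec_\Theta i_2\prec_\Theta\cdots$.
   Context: Hybrid language: fix disjoint countably infinite sets $\mathbf{Prop}$ (propositional variables) and $\mathbf{Nom}$ (nominals). Formulas: $\varphi ::= p \mid i \mid \neg\varphi \mid \varphi\land\varphi \mid \Diamond\varphi \mid @_i\varphi$ with $p\in\mathbf{Prop}$, $i\in\mathbf{Nom}$; $\Box\varphi$ abbreviates $\neg\Diamond\neg\varphi$. Tableau calculus $\mathbf{TAB}_{\mathbf{IB}}$. A tableau is a well-founded tree whose nodes are formulas of the form $@_i\varphi$; its root is a formula $@_i\varphi$ (the root formula) where $i$ does not occur in $\varphi$. A branch is a maximal path; $\varphi\in\Theta$ means $\varphi$ occurs on branch $\Theta$. Each branch is extended by applying the rules below to its formulas as often as possible, except that no further formula is added to a branch once either (i) every new formula generated by applying any rule already occurs on the branch, or (ii) the branch is closed, i.e. contains $@_i\varphi$ and $@_i\neg\varphi$ for some formula $\varphi$ and nominal $i$. An accessibility formula is a formula $@_i\Diamond j$ added by rule $[\Diamond]$ (with $j$ the new nominal). Rules (premises already on the branch; conclusions added to it): [$\neg\neg$] from $@_i\neg\neg\varphi$ add $@_i\varphi$; [$\land$] from $@_i(\varphi\land\psi)$ add $@_i\varphi$ and $@_i\psi$; [$\neg\land$] from $@_i\neg(\varphi\land\psi)$ split the branch into one extended by $@_i\neg\varphi$ and one extended by $@_i\neg\psi$;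 [$\Diamond$] from $@_i\Diamond\varphi$, which is not an accessibility formula, add $@_i\Diamond j$ and $@_j\varphi$ where $j$ is a nominal not occurring on the branch; this rule is applied at most once per formula, and only if $i$ is a quasi-urfather on the branch (defined below); [$\neg\Diamond$] from $@_i\neg\Diamond\varphi$ and $@_i\Diamond j$ add $@_j\neg\varphi$; [$\Box_{sym}$] from $@_i\Box\varphi$ and $@_j\Diamond i$ add $@_j\varphi$; [$@$] from $@_i@_j\varphi$ add $@_j\varphi$; [$\neg@$] from $@_i\neg@_j\varphi$ add $@_j\neg\varphi$; [$Id$] from $@_i\varphi$, which is not an accessibility formula, and $@_i j$ add $@_j\varphi$; [$Ref$] for any nominal $i$ occurring on the branch add $@_i i$; ($\mathcal{I}$) for any nominal $i$ occurring on the branch add $@_i\neg\Diamond i$. Auxiliary notions for a branch $\Theta$. $@_i\varphi$ is a quasi-subformula of $@_j\psi$ if $\varphi$ is a subformula of $\psi$, or $\varphi=\neg\chi$ with $\chi$ a subformula of $\psi$. For a nominal $i$ occurring in $\Theta$, $T^\Theta(i)=\{\varphi \mid @_i\varphi\in\Theta$ and $@_i\varphi$ is a quasi-subformula of the root formula$\}$. Nominals $i,j$ are twins if $T^\Theta(i)=T^\Theta(j)$. $i\prec_\Theta j$ if $j$ was introduced by applying $[\Diamond]$ to a formula $@_i\Diamond\varphi$ (equivalently, the accessibility formula $@_i\Diamond j$ is in $\Theta$); $\prec_\Theta^*$ is its reflexive transitive closure. A nominal $i$ is a quasi-urfather on $\Theta$ if there are no twins $j\neq k$ with $j\prec_\Theta^*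 i$ and $k\prec_\Theta^* i$. *)

(* Defs.v *)
From Stdlib Require Import List Arith Relations.
Import ListNotations.

(* Prop = nat (via FProp), Nom = nat (via FNom): disjoint countably infinite sets. *)
Inductive form : Type :=
| FProp (p : nat)
| FNom (i : nat)
| FNeg (f : form)
| FAnd (f g : form)
| FDia (f : form)
| FAt (i : nat) (f : form).

Definition FBox (f : form) : form := FNeg (FDia (FNeg f)).

Inductive subf : form -> form -> Prop :=
| subf_refl f : subf f f
| subf_neg f g : subf f g -> subf f (FNeg g)
| subf_andl f g h : subf f g -> subf f (FAnd g h)
| subf_andr f g h : subf f h -> subf f (FAnd g h)
| subf_dia f g : subf f g -> subf f (FDia g)
| subf_at f i g : subf f g -> subf f (FAt i g).

Definition qsub (f g : form) : Prop :=
  subf f g \/ exists h, f = FNeg h /\ subf h g.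

Inductive nom_in (i : nat) : form -> Prop :=
| ni_nom : nom_in i (FNom i)
| ni_neg f : nom_in i f -> nom_in i (FNeg f)
| ni_andl f g : nom_in i f -> nom_in i (FAnd f g)
| ni_andr f g : nom_in i g -> nom_in i (FAnd f g)
| ni_dia f : nom_in i f -> nom_in i (FDia f)
| ni_at_here f : nom_in i (FAt i f)
| ni_at f j : nom_in i f -> nom_in i (FAt j f).

(* A node of a branch: the formula @_(nnom) (nfrm).  [nsrc = Some f] records
   that the node is an accessibility formula @_i<>j added by rule [<>]
   applied to @_i<>f;  [nsrc = None] for all other nodes. *)
Record node : Type := mkN { nnom : nat; nfrm : form; nsrc : option form }.

Definition lf_in (Th : list node) (i : nat) (f : form) : Prop :=
  exists s, In (mkN i f s) Th.

Definition lf_nacc (Th : list node) (i : nat) (f : form) : Prop :=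
  In (mkN i f None) Th.

Definition nom_on (Th : list node) (i : nat) : Prop :=
  exists x, In x Th /\ (nnom x = i \/ nom_in i (nfrm x)).

Definition closed (Th : list node) : Prop :=
  exists i f, lf_in Th i f /\ lf_in Th i (FNeg f).

Definition prec (Th : list node) (i j : nat) : Prop :=
  exists f, In (mkN i (FDia (FNom j)) (Some f)) Th.

(* T^Th(i), relative to the root formula @_{i0} f0 (only f0 matters) *)
Definition Tset (f0 : form) (Th : list node) (i : nat) (f : form) : Prop :=
  lf_in Th i f /\ qsub f f0.

Definition twins (f0 : form) (Th : list node) (j k : nat) : Prop :=
  forall f, Tset f0 Th j f <-> Tset f0 Th k f.

Definition quasi_urfather (f0 : form) (Th : list node) (i : nat) : Prop :=
  ~ exists j k, j <> k /\ twins f0 Th j k /\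
      clos_refl_trans nat (prec Th) j i /\ clos_refl_trans nat (prec Th) k i.

(* A rule instance is
   given by its list of alternatives (one alternative for a non-branching
   rule, two for [~/\]); each alternative is the list of its conclusions
   @_i f, written as pairs (i, f). *)
Inductive ord_rule (Th : list node) : list (list (nat * form)) -> Prop :=
| r_negneg i f : lf_in Th i (FNeg (FNeg f)) -> ord_rule Th [[(i, f)]]
| r_and i f g : lf_in Th i (FAnd f g) -> ord_rule Th [[(i, f); (i, g)]]
| r_negand i f g : lf_in Th i (FNeg (FAnd f g)) ->
    ord_rule Th [[(i, FNeg f)]; [(i, FNeg g)]]
| r_negdia i j f : lf_in Th i (FNeg (FDia f)) -> lf_in Th i (FDia (FNom j)) ->
    ord_rule Th [[(j, FNeg f)]]
| r_boxsym i j f : lf_in Th i (FBox f) -> lf_in Th j (FDia (FNom i)) ->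
    ord_rule Th [[(j, f)]]
| r_at i j f : lf_in Th i (FAt j f) -> ord_rule Th [[(j, f)]]
| r_negat i j f : lf_in Th i (FNeg (FAt j f)) -> ord_rule Th [[(j, FNeg f)]]
| r_id i j f : lf_nacc Th i f -> lf_in Th i (FNom j) -> ord_rule Th [[(j, f)]]
| r_ref i : nom_on Th i -> ord_rule Th [[(i, FNom i)]]
| r_irr i : nom_on Th i -> ord_rule Th [[(i, FNeg (FDia (FNom i)))]].

Definition rule_sat (Th : list node) (alts : list (list (nat * form))) : Prop :=
  exists alt, In alt alts /\ forall p, In p alt -> lf_in Th (fst p) (snd p).

Definition ord_pending (Th : list node) alts : Prop :=
  ord_rule Th alts /\ ~ rule_sat Th alts.

Definition dia_applied (Th : list node) (i : nat) (f : form) : Prop :=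
  exists j, In (mkN i (FDia (FNom j)) (Some f)) Th.

Definition dia_pending (f0 : form) (Th : list node) (i : nat) (f : form) : Prop :=
  lf_nacc Th i (FDia f) /\ ~ dia_applied Th i f /\ quasi_urfather f0 Th i.

Definition saturated (f0 : form) (Th : list node) : Prop :=
  (forall alts, ~ ord_pending Th alts) /\ (forall i f, ~ dia_pending f0 Th i f).

Definition tab_step (f0 : form) (Th : list node) (S : list node) : Prop :=
  (exists alts alt, ord_pending Th alts /\ In alt alts /\ NoDup S /\
     forall x, In x S <->
       (nsrc x = None /\ In (nnom x, nfrm x) alt /\ ~ lf_in Th (nnom x) (nfrm x)))
  \/
  (exists i f j, dia_pending f0 Th i f /\ ~ nom_on Th j /\
     S = [mkN i (FDia (FNom j)) (Some f); mkN j f None]).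

(* A branch is presented as the sequence of its expansion steps:
   [th n = Some S] means that at stage n the nodes S were appended;
   [th n = None] means the branch has stopped.  Stage 0 is the root. *)
Fixpoint pre (th : nat -> option (list node)) (n : nat) : list node :=
  match n with
  | 0 => []
  | S m => pre th m ++ match th m with Some l => l | None => [] end
  end.

Definition IsBranch (i0 : nat) (f0 : form) (th : nat -> option (list node)) : Prop :=
  th 0 = Some [mkN i0 f0 None] /\ ~ nom_in i0 f0 /\
  (forall n, th n = None -> th (S n) = None) /\
  (forall n S, 0 < n -> th n = Some S -> ~ closed (pre th n) /\ tab_step f0 (pre th n) S) /\
  (forall n S, th n = Some S -> th (Datatypes.S n) = None ->
     closed (pre th (Datatypes.S n)) \/ saturated f0 (pre th (Datatypes.S n))) /\
  (* rules are applied as often as possible: no rule instance stays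
     applicable-but-unapplied forever *)
  (forall alts n, ~ (forall m, n <= m -> th m <> None /\ ord_pending (pre th m) alts)) /\
  (forall i f n, ~ (forall m, n <= m -> th m <> None /\ dia_pending f0 (pre th m) i f)).

Definition branch_infinite (th : nat -> option (list node)) : Prop :=
  forall N, exists n, N <= length (pre th n).

Definition branch_prec (th : nat -> option (list node)) (i j : nat) : Prop :=
  exists n, prec (pre th n) i j.

(* Main.v *)
Require Import Defs.
From Stdlib Require Import List Arith Relations Lia Classical ClassicalEpsilon.
Import ListNotations.

Lemma subf_trans a b c : subf a b -> subf b c -> subf a c.
Proof. intros H1 H2; induction H2; eauto using subf. Qed.

Fixpoint subs (f : form) : list form :=
  f :: match f with
       | FNeg g => subs g | FAnd g h => subs g ++ subs h | FDia g => subs g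
       | FAt _ g => subs g | _ => [] end.

Lemma subs_complete g f : subf g f -> In g (subs f).
Proof. induction 1; try (destruct f; simpl; auto; fail); simpl; auto; right; apply in_or_app; auto. Qed.

Fixpoint noms (f : form) : list nat :=
  match f with FProp _ => [] | FNom i => [i] | FNeg g => noms g
  | FAnd g h => noms g ++ noms h
  | FDia g => noms g | FAt i g => i :: noms g end.

Lemma noms_complete j f : nom_in j f -> In j (noms f).
Proof. induction 1; simpl; auto; apply in_or_app; auto. Qed.

Lemma pre_S th n : pre th (S n) = pre th n ++ match th n with Some l => l | None => [] end.
Proof. reflexivity. Qed.

Lemma pre_mono th m n : m <= n -> incl (pre th m) (pre th n).
Proof. induction 1. apply incl_refl. rewrite pre_S. intros x Hx. apply in_or_app. left. auto. Qed.

Lemma pre_in th n x : In x (pre th n) -> exists m L, m < n /\ th m = Some L /\ In x L.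
Proof. induction n; simpl; [tauto|]. intros H. apply in_app_or in H. destruct H as [H|H].
 - destruct (IHn H) as (m & L & ? & ? & ?). exists m, L. split; [lia| auto].
 - destruct (th n) eqn:E; [|destruct H]. exists n, l. auto. Qed.

Lemma in_pre th m L x : th m = Some L -> In x L -> In x (pre th (S m)).
Proof. intros E H. rewrite pre_S, E. apply in_or_app; auto. Qed.

Lemma some_intro i0 f0 th i c f n : IsBranch i0 f0 th ->
  In (mkN i (FDia (FNom c)) (Some f)) (pre th n) ->
  exists m, m < n /\ th m = Some [mkN i (FDia (FNom c)) (Some f); mkN c f None] /\
    dia_pending f0 (pre th m) i f /\ ~ nom_on (pre th m) c.
Proof.
  intros HB Hin. destruct HB as (H0 & _ & _ & Hstep & _).
  destruct (pre_in _ _ _ Hin) as (m & L & Hlt & Hth & HL).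
  exists m. split; [exact Hlt|].
  destruct m as [|m'].
  - rewrite H0 in Hth. injection Hth as <-. destruct HL as [HL|[]]. discriminate.
  - destruct (Hstep (S m') L ltac:(lia) Hth) as [_ [Hord|Hdia]].
    + destruct Hord as (alts & alt & _ & _ & _ & Hiff). apply Hiff in HL. simpl in HL.
      destruct HL as [HL _]; discriminate.
    + destruct Hdia as (i' & f' & j' & Hp & Hn & ->). destruct HL as [HL|[HL|[]]].
      * injection HL as E1 E2 E3. subst. auto.
      * discriminate.
Qed.

Definition shapeN (f0 g : form) : Prop :=
  qsub g f0 \/ exists k, g = FNom k \/ g = FNeg (FNom k) \/ g = FNeg (FDia (FNom k)).
Definition shape (f0 : form) (x : node) : Prop :=
  (nsrc x = None /\ shapeN f0 (nfrm x)) \/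
  (exists f k, nsrc x = Some f /\ nfrm x = FDia (FNom k) /\ subf (FDia f) f0).

Lemma qsub_neg h f0 : qsub (FNeg h) f0 -> subf h f0.
Proof. intros [H|(h' & E & H)].
  - eapply subf_trans; [|exact H]. apply subf_neg, subf_refl.
  - injection E as ->. exact H. Qed.

Lemma lf_shape f0 Th i g : (forall x, In x Th -> shape f0 x) -> lf_in Th i g ->
  shapeN f0 g \/ exists k, g = FDia (FNom k).
Proof. intros Hinv [s Hs]. destruct (Hinv _ Hs) as [[_ H]|(f & k & _ & E & _)]; simpl in *; eauto. Qed.

Lemma prem_neg f0 Th i g : (forall x, In x Th -> shape f0 x) -> lf_in Th i (FNeg g) ->
  subf g f0 \/ exists k, g = FNom k \/ g = FDia (FNom k).
Proof.
  intros Hinv H. destruct (lf_shape _ _ _ _ Hinv H) as [[Hq|(k & [E|[E|E]])]|(k & E)];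
    try discriminate.
  - left. apply qsub_neg. exact Hq.
  - injection E as ->. eauto.
  - injection E as ->. eauto.
Qed.

Lemma prem_sub f0 Th i g : (forall x, In x Th -> shape f0 x) -> lf_in Th i g ->
  (forall h, g <> FNeg h) -> (forall k, g <> FNom k) -> (forall k, g <> FDia (FNom k)) ->
  subf g f0.
Proof.
  intros Hinv H N1 N2 N3. destruct (lf_shape _ _ _ _ Hinv H) as [[[Hq|(h & E & _)]|(k & [E|[E|E]])]|(k & E)];
    try (exfalso; eapply N1; eassumption); try (exfalso; eapply N2; eassumption);
    try (exfalso; eapply N3; eassumption); auto.
Qed.

Lemma sN_sub f0 g : subf g f0 -> shapeN f0 g.
Proof. intros; left; left; auto. Qed.
Lemma sN_negsub f0 g : subf g f0 -> shapeN f0 (FNeg g).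
Proof. intros; left; right; eauto. Qed.

Ltac subst_sub H := eapply subf_trans; [|exact H]; eauto using subf.

Lemma ord_shape f0 Th alts alt p : (forall x, In x Th -> shape f0 x) ->
  ord_rule Th alts -> In alt alts -> In p alt -> shapeN f0 (snd p).
Proof.
  intros Hinv Hr Ha Hp.
  destruct Hr as [i f H|i f g H|i f g H|i j f H H'|i j f H H'|i j f H|i j f H|i j f H H'|i H|i H];
    simpl in Ha; repeat (destruct Ha as [<-|Ha]); try contradiction;
    simpl in Hp; repeat (destruct Hp as [<-|Hp]); try contradiction; simpl.
  - destruct (prem_neg _ _ _ _ Hinv H) as [Hs|(k & [E|E])]; try discriminate.
    apply sN_sub. subst_sub Hs.
  - apply sN_sub. assert (Hs : subf (FAnd f g) f0) by
      (eapply prem_sub; eauto; intros; discriminate). subst_sub Hs.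
  - apply sN_sub. assert (Hs : subf (FAnd f g) f0) by
      (eapply prem_sub; eauto; intros; discriminate). subst_sub Hs.
  - destruct (prem_neg _ _ _ _ Hinv H) as [Hs|(k & [E|E])]; try discriminate.
    apply sN_negsub. subst_sub Hs.
  - destruct (prem_neg _ _ _ _ Hinv H) as [Hs|(k & [E|E])]; try discriminate.
    apply sN_negsub. subst_sub Hs.
  - destruct (prem_neg _ _ _ _ Hinv H) as [Hs|(k & [E|E])]; try discriminate.
    + apply sN_negsub. subst_sub Hs.
    + injection E as ->. right. eauto.
  - unfold FBox in H. destruct (prem_neg _ _ _ _ Hinv H) as [Hs|(k & [E|E])]; try discriminate.
    apply sN_sub. subst_sub Hs.
  - apply sN_sub. assert (Hs : subf (FAt j f) f0) by
      (eapply prem_sub; eauto; intros; discriminate). subst_sub Hs.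
  - destruct (prem_neg _ _ _ _ Hinv H) as [Hs|(k & [E|E])]; try discriminate.
    apply sN_negsub. subst_sub Hs.
  - destruct (Hinv _ H) as [[_ Hs]|(g & k & E & _)]; [exact Hs| discriminate].
  - right. eauto.
  - right. eauto.
Qed.

Lemma shape_inv i0 f0 th : IsBranch i0 f0 th -> forall n x, In x (pre th n) -> shape f0 x.
Proof.
  intros HB. pose proof HB as (H0 & _ & _ & Hstep & _).
  induction n as [|n IH]; intros x Hx; [destruct Hx|].
  rewrite pre_S in Hx. apply in_app_or in Hx. destruct Hx as [Hx|Hx]; [auto|].
  destruct (th n) as [L|] eqn:E; [|destruct Hx].
  destruct n as [|n'].
  - rewrite H0 in E. injection E as <-. destruct Hx as [<-|[]]. left. simpl.
    split; [reflexivity|]. left. left. apply subf_refl.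
  - destruct (Hstep (S n') L ltac:(lia) E) as [_ [Hord|Hdia]].
    + destruct Hord as (alts & alt & [Hr _] & Ha & _ & Hiff). apply Hiff in Hx as (Hs & Hp & _).
      left. split; [exact Hs|]. eapply (ord_shape _ _ _ _ _ IH Hr Ha Hp).
    + destruct Hdia as (i & f & j & (Hn & _ & _) & _ & ->).
      pose proof (IH _ Hn) as [[_ Hs]|(g & k & Hs & _)]; [|discriminate].
      simpl in Hs. assert (Hf : subf (FDia f) f0).
      { destruct Hs as [[Hq|(h & Eh & _)]|(k & [Ek|[Ek|Ek]])]; first [assumption | discriminate]. }
      destruct Hx as [<-|[<-|[]]].
      * right. exists f, j. simpl. auto.
      * left. simpl. split; [reflexivity|]. left. left. eapply subf_trans; [|exact Hf]. eauto using subf.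
Qed.

Lemma pre_nodup i0 f0 th : IsBranch i0 f0 th -> forall n, NoDup (pre th n).
Proof.
  intros HB. pose proof HB as (H0 & _ & _ & Hstep & _).
  induction n as [|n IH]; [constructor|].
  rewrite pre_S. destruct (th n) as [L|] eqn:E; [|rewrite app_nil_r; exact IH].
  destruct n as [|n'].
  - rewrite H0 in E. injection E as <-. simpl. repeat constructor. simpl; tauto.
  - destruct (Hstep (S n') L ltac:(lia) E) as [_ [Hord|Hdia]].
    + destruct Hord as (alts & alt & _ & _ & Hnd & Hiff). apply NoDup_app; auto.
      intros x Hx Hx'. apply Hiff in Hx' as (_ & _ & Hn). apply Hn.
      destruct x as [a b c]; simpl. exists c. exact Hx.
    + destruct Hdia as (i & f & j & _ & Hn & ->). apply NoDup_app; auto.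
      constructor; [|constructor; [simpl; tauto| constructor]].
      intros [E1|[]]. discriminate.
      intros x Hx [<-|[<-|[]]]; apply Hn; eexists; split; try exact Hx; simpl.
      * right. constructor. constructor.
      * left. reflexivity.
Qed.

Lemma ord_noms Th alts alt p j : ord_rule Th alts -> In alt alts -> In p alt ->
  (fst p = j \/ nom_in j (snd p)) -> nom_on Th j.
Proof.
  intros Hr Ha Hp Hj.
  assert (Node : forall i g s, In (mkN i g s) Th -> (i = j \/ nom_in j g) -> nom_on Th j).
  { intros i g s Hi Hg. exists (mkN i g s). simpl. auto. }
  destruct Hr as [i f [s H]|i f g [s H]|i f g [s H]|i j' f [s H] [s' H']|i j' f [s H] [s' H']
                 |i j' f [s H]|i j' f [s H]|i j' f H [s' H']|i H|i H];
    simpl in Ha; repeat (destruct Ha as [<-|Ha]); try contradiction;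
    simpl in Hp; repeat (destruct Hp as [<-|Hp]); try contradiction; simpl in Hj.
  all: destruct Hj as [<-|Hj].
  all: try solve [ eapply Node; [exact H|left; reflexivity] | eapply Node; [exact H'|left; reflexivity]
                 | eapply Node; [exact H'|right; eauto using nom_in] | auto ].
  all: try solve [ eapply Node; [exact H|right; unfold FBox; eauto 7 using nom_in] ].
  all: try solve [ inversion Hj; subst; eapply Node; [exact H|right; eauto 7 using nom_in] ].
  all: try solve [ inversion Hj; subst; auto ].
  all: try solve [ inversion Hj; subst; match goal with H : nom_in _ (FDia _) |- _ => inversion H; subst end;
                   match goal with H : nom_in _ (FNom _) |- _ => inversion H; subst end; auto ].
Qed.

Definition desc th := clos_refl_trans nat (branch_prec th).

Lemma root_desc i0 f0 th : IsBranch i0 f0 th -> forall n j, nom_on (pre th n) j ->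
  exists r, nom_on (pre th 1) r /\ desc th r j.
Proof.
  intros HB. pose proof HB as (H0 & _ & _ & Hstep & _).
  induction n as [|n IH]; intros j Hj; [destruct Hj as (x & [] & _)|].
  destruct n as [|n'].
  - exists j. split; [exact Hj| apply rt_refl].
  - destruct Hj as (x & Hx & Hxj). rewrite pre_S in Hx. apply in_app_or in Hx.
    destruct Hx as [Hx|Hx]; [apply IH; exists x; auto|].
    destruct (th (S n')) as [L|] eqn:E; [|destruct Hx].
    destruct (Hstep (S n') L ltac:(lia) E) as [_ [Hord|Hdia]].
    + destruct Hord as (alts & alt & [Hr _] & Ha & _ & Hiff). apply Hiff in Hx as (_ & Hp & _).
      apply IH. eapply ord_noms; eauto.
    + destruct Hdia as (i & f & c & (Hn & _ & _) & _ & ->).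
      assert (Hi : nom_on (pre th (S n')) i) by (eexists; split; [exact Hn| left; reflexivity]).
      assert (Hc : exists r, nom_on (pre th 1) r /\ desc th r c).
      { destruct (IH i Hi) as (r & Hr & Hd). exists r. split; [exact Hr|].
        eapply rt_trans; [exact Hd|]. apply rt_step. exists (S (S n')), f.
        eapply in_pre; [exact E| left; reflexivity]. }
      destruct Hx as [<-|[<-|[]]]; simpl in Hxj.
      * destruct Hxj as [<-|Hxj]; [apply IH; exact Hi|].
        inversion Hxj; subst. inversion H1; subst. exact Hc.
      * destruct Hxj as [<-|Hxj]; [exact Hc|]. apply IH. eexists; split; [exact Hn|].
        right. simpl. constructor. exact Hxj.
Qed.

Lemma nonempty i0 f0 th m L : IsBranch i0 f0 th -> th m = Some L -> L <> [].
Proof.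
  intros HB E. pose proof HB as (H0 & _ & _ & Hstep & _).
  destruct m as [|m'].
  - rewrite H0 in E. injection E as <-. discriminate.
  - destruct (Hstep (S m') L ltac:(lia) E) as [_ [Hord|Hdia]].
    + destruct Hord as (alts & alt & [Hr Hns] & Ha & _ & Hiff).
      assert (Hp : exists p, In p alt /\ ~ lf_in (pre th (S m')) (fst p) (snd p)).
      { apply NNPP. intros Hc. apply Hns. exists alt. split; [exact Ha|].
        intros p Hp. apply NNPP. intros Hl. apply Hc. eauto. }
      destruct Hp as (p & Hp & Hl). intros ->.
      assert (Hin : In (mkN (fst p) (snd p) None) []).
      { apply Hiff. simpl. destruct p; auto. }
      destruct Hin.
    + destruct Hdia as (i & f & c & _ & _ & ->). discriminate.
Qed.

Lemma len_pre i0 f0 th n : IsBranch i0 f0 th -> (forall m, m < n -> th m <> None) ->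
  n <= length (pre th n).
Proof.
  intros HB. induction n as [|n IH]; intros Hs; [simpl; lia|].
  rewrite pre_S, length_app. destruct (th n) as [L|] eqn:E.
  - assert (L <> []) by (eapply nonempty; eauto). destruct L; [congruence|]. simpl.
    assert (n <= length (pre th n)) by (apply IH; intros; apply Hs; lia). lia.
  - exfalso. apply (Hs n); auto.
Qed.

Lemma persist i0 f0 th n m : IsBranch i0 f0 th -> th n = None -> n <= m -> th m = None.
Proof.
  intros HB E. pose proof HB as (_ & _ & Hp & _). induction 1; auto.
Qed.

Lemma chain_infinite i0 f0 th (sq : nat -> nat) : IsBranch i0 f0 th ->
  (forall k, branch_prec th (sq k) (sq (S k))) -> branch_infinite th.
Proof.
  intros HB Hsq.
  assert (Hst : forall k, exists m, k <= m /\ th m <> None /\ ~ nom_on (pre th m) (sq (S k))).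
  { induction k as [|k IH].
    - destruct (Hsq 0) as (n & f & Hn). destruct (some_intro _ _ _ _ _ _ _ HB Hn) as (m & _ & Hm & _ & Hnn).
      exists m. split; [lia|]. split; [congruence|exact Hnn].
    - destruct IH as (m & Hkm & _ & Hnn).
      destruct (Hsq (S k)) as (n & f & Hn). destruct (some_intro _ _ _ _ _ _ _ HB Hn) as (m' & _ & Hm' & (Hl & _ & _) & Hnn').
      exists m'. split; [|split; [congruence|exact Hnn']].
      destruct (le_lt_dec m' m) as [Hle|Hlt]; [|lia].
      exfalso. apply Hnn. eexists; split; [apply (pre_mono _ _ _ Hle); exact Hl| left; reflexivity]. }
  assert (Hall : forall n, th n <> None).
  { intros n En. destruct (Hst n) as (m & Hnm & Hm & _). apply Hm. eapply persist; eauto. }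
  intros N. exists N. apply (len_pre i0 f0); auto.
Qed.

Definition FL f0 B : list form :=
  subs f0 ++ map FNeg (subs f0) ++
  flat_map (fun k => [FNom k; FNeg (FNom k); FNeg (FDia (FNom k)); FDia (FNom k)]) (seq 0 B).
Definition SL f0 : list (option form) := None :: map Some (subs f0).
Definition UL f0 B : list node :=
  flat_map (fun i => flat_map (fun g => map (fun s => mkN i g s) (SL f0)) (FL f0 B)) (seq 0 B).

Lemma inU f0 B i g s : i < B -> In g (FL f0 B) -> In s (SL f0) -> In (mkN i g s) (UL f0 B).
Proof.
  intros Hi Hg Hs. unfold UL. apply in_flat_map. exists i. split; [apply in_seq; lia|].
  apply in_flat_map. exists g. split; [exact Hg|]. apply in_map_iff. exists s. auto.
Qed.

Lemma inFL_nom f0 B k g : k < B -> In g [FNom k; FNeg (FNom k); FNeg (FDia (FNom k)); FDia (FNom k)] ->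
  In g (FL f0 B).
Proof.
  intros Hk Hg. unfold FL. apply in_or_app; right. apply in_or_app; right.
  apply in_flat_map. exists k. split; [apply in_seq; lia| exact Hg].
Qed.

Lemma bounded_finite i0 f0 th B : IsBranch i0 f0 th ->
  (forall n j, nom_on (pre th n) j -> j < B) -> forall n, length (pre th n) <= length (UL f0 B).
Proof.
  intros HB Hb n. apply NoDup_incl_length; [eapply pre_nodup; eauto|].
  intros x Hx. destruct x as [i g s].
  assert (Hi : i < B) by (eapply Hb; exists (mkN i g s); split; [exact Hx| left; reflexivity]).
  assert (Hk : forall k, nom_in k g -> k < B) by
    (intros k Hk; eapply Hb; exists (mkN i g s); split; [exact Hx| right; exact Hk]).
  apply inU; [exact Hi| |].
  - destruct (shape_inv _ _ _ HB _ _ Hx) as [[_ Hs]|(f & k & _ & E & _)]; simpl in *.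
    + destruct Hs as [[Hq|(h & -> & Hq)]|(k & [ -> | [ -> | -> ] ])].
      * unfold FL. apply in_or_app; left. apply subs_complete; auto.
      * unfold FL. apply in_or_app; right. apply in_or_app; left. apply in_map. apply subs_complete; auto.
      * apply inFL_nom with k; [apply Hk; constructor| simpl; auto].
      * apply inFL_nom with k; [apply Hk; repeat constructor| simpl; auto].
      * apply inFL_nom with k; [apply Hk; repeat constructor| simpl; auto].
    + subst g. apply inFL_nom with k; [apply Hk; repeat constructor| simpl; auto 6].
  - destruct (shape_inv _ _ _ HB _ _ Hx) as [[Hs _]|(f & k & Hs & _ & Hf)]; simpl in *; subst s.
    + left; reflexivity.
    + right. apply in_map. apply subs_complete. eapply subf_trans; [|exact Hf]. eauto using subf.
Qed.

Lemma inf_noms i0 f0 th : IsBranch i0 f0 th -> branch_infinite th ->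
  forall B, exists n j, B <= j /\ nom_on (pre th n) j.
Proof.
  intros HB Hinf B. apply NNPP. intros Hc.
  assert (Hb : forall n j, nom_on (pre th n) j -> j < B).
  { intros n j Hj. destruct (le_lt_dec B j) as [Hle|]; auto. exfalso. apply Hc. eauto. }
  destruct (Hinf (S (length (UL f0 B)))) as (n & Hn).
  pose proof (bounded_finite _ _ _ _ HB Hb n). lia.
Qed.

Lemma pigeon (L : list nat) (P : nat -> Prop) (R : nat -> nat -> Prop) :
  (forall B, exists j, B <= j /\ exists r, In r L /\ P r /\ R r j) ->
  exists r, In r L /\ P r /\ forall B, exists j, B <= j /\ R r j.
Proof.
  induction L as [|a L IH]; intros H.
  - destruct (H 0) as (j & _ & r & [] & _).
  - destruct (classic (forall B, exists j, B <= j /\ exists r, In r L /\ P r /\ R r j)) as [HL|HL].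
    + destruct (IH HL) as (r & ? & ? & ?). exists r. simpl. auto.
    + apply not_all_ex_not in HL as (B1 & HB1).
      assert (Ha : forall B, exists j, B <= j /\ P a /\ R a j).
      { intros B. destruct (H (max B B1)) as (j & Hj & r & [<-|Hr] & Hp & HR).
        - exists j. split; [lia| auto].
        - exfalso. apply HB1. exists j. split; [lia|]. eauto. }
      exists a. split; [left; reflexivity|]. split.
      * destruct (Ha 0) as (j & _ & ? & _); auto.
      * intros B. destruct (Ha B) as (j & ? & _ & ?). eauto.
Qed.

Definition Inf th i := forall B, exists j, B <= j /\ desc th i j.

Lemma some_unique i0 f0 th i c c' f : IsBranch i0 f0 th ->
  (exists n, In (mkN i (FDia (FNom c)) (Some f)) (pre th n)) ->
  (exists n, In (mkN i (FDia (FNom c')) (Some f)) (pre th n)) -> c = c'.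
Proof.
  intros HB [n Hn] [n' Hn'].
  destruct (some_intro _ _ _ _ _ _ _ HB Hn) as (m & _ & Hm & (_ & Hna & _) & _).
  destruct (some_intro _ _ _ _ _ _ _ HB Hn') as (m' & _ & Hm' & (_ & Hna' & _) & _).
  destruct (lt_eq_lt_dec m m') as [[Hlt|<-]|Hlt].
  - exfalso. apply Hna'. exists c. apply (pre_mono _ (S m)); [lia|]. eapply in_pre; [exact Hm| left; reflexivity].
  - rewrite Hm in Hm'. injection Hm' as E. auto.
  - exfalso. apply Hna. exists c'. apply (pre_mono _ (S m')); [lia|]. eapply in_pre; [exact Hm'| left; reflexivity].
Qed.

Lemma children_finite i0 f0 th i : IsBranch i0 f0 th ->
  exists cs, forall c, branch_prec th i c -> In c cs.
Proof.
  intros HB.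
  assert (Hg : forall D, exists cs, forall c f, In f D ->
     (exists n, In (mkN i (FDia (FNom c)) (Some f)) (pre th n)) -> In c cs).
  { induction D as [|f D IH].
    - exists []. intros c f [].
    - destruct IH as (cs & Hcs).
      destruct (classic (exists c, exists n, In (mkN i (FDia (FNom c)) (Some f)) (pre th n))) as [(c0 & Hc0)|Hno].
      + exists (c0 :: cs). intros c g [<-|Hg] Hc.
        * left. eapply some_unique; eauto.
        * right. eauto.
      + exists cs. intros c g [<-|Hg] Hc.
        * exfalso. eauto.
        * eauto. }
  destruct (Hg (subs f0)) as (cs & Hcs). exists cs.
  intros c (n & f & Hn). apply (Hcs c f); [|eauto].
  destruct (shape_inv _ _ _ HB _ _ Hn) as [[Hs _]|(g & k & Hs & _ & Hf)]; simpl in *; [discriminate|].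
  injection Hs as <-. apply subs_complete. eapply subf_trans; [|exact Hf]. eauto using subf.
Qed.

Lemma konig_step i0 f0 th i : IsBranch i0 f0 th -> Inf th i ->
  exists c, branch_prec th i c /\ Inf th c.
Proof.
  intros HB Hi. destruct (children_finite _ _ _ i HB) as (cs & Hcs).
  assert (Hp : exists r, In r cs /\ branch_prec th i r /\ Inf th r).
  2:{ destruct Hp as (r & _ & ? & ?). eauto. }
  apply (pigeon cs (branch_prec th i) (desc th)).
  intros B. destruct (Hi (max B (S i))) as (j & Hj & Hd).
  exists j. split; [lia|].
  apply clos_rt_rt1n in Hd. destruct Hd as [|y z Hy Hz]; [lia|].
  exists y. split; [auto|]. split; [auto|]. apply clos_rt1n_rt. exact Hz.
Qed.

Lemma infinite_chain i0 f0 th : IsBranch i0 f0 th -> branch_infinite th ->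
  exists sq : nat -> nat, forall k, branch_prec th (sq k) (sq (S k)).
Proof.
  intros HB Hinf. pose proof HB as (H0 & _).
  assert (Hr : exists r, In r (i0 :: noms f0) /\ True /\ Inf th r).
  { apply (pigeon _ (fun _ => True) (desc th)). intros B.
    destruct (inf_noms _ _ _ HB Hinf B) as (n & j & Hj & Hon).
    destruct (root_desc _ _ _ HB n j Hon) as (r & Hr & Hd).
    exists j. split; [exact Hj|]. exists r. split; [|auto].
    destruct Hr as (x & Hx & Hxr). simpl in Hx. rewrite H0 in Hx. simpl in Hx.
    destruct Hx as [<-|[]]. simpl in Hxr. destruct Hxr as [->|Hxr]; [left; reflexivity|].
    right. apply noms_complete. exact Hxr. }
  destruct Hr as (r & _ & _ & Hr).
  assert (Hc : forall i, exists c, Inf th i -> branch_prec th i c /\ Inf th c).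
  { intros i. destruct (classic (Inf th i)) as [Hi|Hi].
    - destruct (konig_step _ _ _ _ HB Hi) as (c & ?). exists c. auto.
    - exists 0. intros; contradiction. }
  set (g := fun i => proj1_sig (constructive_indefinite_description _ (Hc i))).
  assert (Hgs : forall i, Inf th i -> branch_prec th i (g i) /\ Inf th (g i)).
  { intros i. unfold g. destruct (constructive_indefinite_description _ (Hc i)). simpl. auto. }
  exists (fun k => Nat.iter k g r).
  assert (Hall : forall k, Inf th (Nat.iter k g r)).
  { induction k; simpl; auto. apply Hgs. auto. }
  intros k. simpl. apply Hgs. auto.
Qed.

Theorem lemma4 (i0 : nat) (f0 : form) (th : nat -> option (list node)) :
  IsBranch i0 f0 th ->
  (branch_infinite th <->
   exists seq : nat -> nat, forall k, branch_prec th (seq k) (seq (S k))).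
Proof.
  intros HB. split.
  - apply (infinite_chain i0 f0); auto.
  - intros (sq & Hsq). apply (chain_infinite i0 f0 th sq); auto.
Qed.
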